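(* Let $W$ be a rational $\mathfrak{sl}(2)$-module. If $W$ is $\mathcal R$-simple, then $\mathrm{End}_{\mathfrak{sl}(2)}(W)=\mathbb{C}$ (the scalar multiples of the identity).
   Context: $\mathfrak{sl}(2)$ has basis $L_{-1}=f$, $L_0=-\tfrac12 h$, $L_1=-e$ for a Chevalley basis $e,f,h$. An $\mathfrak{sl}(2)$-module is a $\mathbb{C}[z]$-module via $z\cdot v=L_0 v$; it is rational if with this structure it is a finite-dimensional $\mathbb{C}(z)$-vector space. A rational module $W$ is $\mathcal R$-simple if $W\neq0$ and $W$ has no nonzero proper $\mathfrak{sl}(2)$-submodule that is a $\mathbb{C}(z)$-vector subspace (rational submodule). *)

(* Defs.v *)
(* C = R[i] with R : realType (hence C is (isomorphic to) the complex numbers). *)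
From HB Require Import structures.
From mathcomp Require Import all_boot all_order all_algebra.
From mathcomp Require Import fraction.
From mathcomp Require Import complex.
From mathcomp Require Import reals.
Set Implicit Arguments. Unset Strict Implicit. Unset Printing Implicit Defensive.
Import Order.TTheory GRing.Theory Num.Theory.
Local Open Scope ring_scope.

Section SL2Modules.
Variable R : realType.
Local Notation C := (R[i]).
Local Notation K := {fraction {poly C}}.
Variable W : lmodType C.

Definition is_sl2_module (E F H : {linear W -> W}) : Prop :=
  [/\ forall v, H (E v) - E (H v) = 2%:R *: E v,
      forall v, H (F v) - F (H v) = - (2%:R *: F v)
    & forall v, E (F v) - F (E v) = H v].

Definition L0 (H : {linear W -> W}) (v : W) : W := - ((2%:R : C)^-1 *: H v).

Definition peval (p : {poly C}) (f : W -> W) (v : W) : W :=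
  \sum_(i < size p) p`_i *: iter i f v.

(* act is a C(z)-vector space structure on W extending the C[z]-module
   structure z . v = L_0 v (such an extension is unique when it exists). *)
Definition is_Cz_structure (H : {linear W -> W}) (act : K -> W -> W) : Prop :=
  [/\ forall a (c : C) v w, act a (c *: v + w) = c *: act a v + act a w,
      forall a b v, act (a + b) v = act a v + act b v,
      forall a b v, act (a * b) v = act a (act b v),
      forall v, act 1 v = v
    & forall (p : {poly C}) v, act (FracField.tofrac p) v = peval p (L0 H) v].

Definition Cz_findim (act : K -> W -> W) : Prop :=
  exists (n : nat) (w : 'I_n -> W),
    forall v, exists c : 'I_n -> K, v = \sum_(i < n) act (c i) (w i).

Definition rational_sl2 (E F H : {linear W -> W}) (act : K -> W -> W) : Prop :=
  [/\ is_sl2_module E F H, is_Cz_structure H act & Cz_findim act].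

Definition sl2_submodule (E F H : {linear W -> W}) (S : W -> Prop) : Prop :=
  [/\ S 0,
      forall (c : C) v w, S v -> S w -> S (c *: v + w),
      forall v, S v -> S (E v),
      forall v, S v -> S (F v)
    & forall v, S v -> S (H v)].

Definition Cz_subspace (act : K -> W -> W) (S : W -> Prop) : Prop :=
  [/\ S 0,
      forall v w, S v -> S w -> S (v + w)
    & forall a v, S v -> S (act a v)].

Definition R_simple (E F H : {linear W -> W}) (act : K -> W -> W) : Prop :=
  (exists v : W, v != 0) /\
  forall S : W -> Prop, sl2_submodule E F H S -> Cz_subspace act S ->
    (forall v, S v -> v = 0) \/ (forall v, S v).

Definition sl2_endo (E F H : {linear W -> W}) (phi : {linear W -> W}) : Prop :=
  [/\ forall v, phi (E v) = E (phi v),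
      forall v, phi (F v) = F (phi v)
    & forall v, phi (H v) = H (phi v)].

End SL2Modules.

(* Main.v *)
Require Import Defs.
From HB Require Import structures.
From mathcomp Require Import all_boot all_order all_algebra.
From mathcomp Require Import fraction complex reals.
From mathcomp Require Import ring zify.
From Stdlib Require Import Classical ClassicalEpsilon.

Module PBm.
Import GRing.Theory Num.Theory.
Local Open Scope ring_scope.
Local Open Scope quotient_scope.
Notation "x %:F" := (@FracField.tofrac _ x).

Section FracRep.
Variable T : idomainType.
Lemma piK (r : {ratio T}) : \pi_({fraction T}) r = (\n_r)%:F / (\d_r)%:F.
Proof.
have d0 : r.2 != 0 by exact: denom_ratioP.
have h : (r.2)%:F != 0 :> {fraction T} by rewrite tofrac_eq0.
apply: (mulIf h). rewrite divfK //.
unlock FracField.tofrac.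
rewrite -[X in X = _]pi_mul.
apply/eqmodP => /=. rewrite FracField.equivfE /FracField.mulf /=.
rewrite !numden_Ratio ?oner_eq0 ?mulf_neq0 ?oner_neq0 //.
by rewrite !mulr1 mulrC.
Qed.

Lemma frac_repr (x : {fraction T}) : x = (\n_(repr x))%:F / (\d_(repr x))%:F.
Proof. by rewrite -piK reprK. Qed.

Lemma frac_rep (x : {fraction T}) : exists n d, d != 0 /\ x = n%:F / d%:F.
Proof. exists (\n_(repr x)), (\d_(repr x)); split; [exact: denom_ratioP| exact: frac_repr]. Qed.

Lemma fracP (n d n' d' : T) : d != 0 -> d' != 0 ->
  (n%:F / d%:F == n'%:F / d'%:F :> {fraction T}) = (n * d' == n' * d).
Proof.
move=> hd hd'; rewrite eqr_div ?tofrac_eq0 // -!tofracM; exact: tofrac_eq.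
Qed.
End FracRep.
Arguments piK {T} r.
Arguments frac_repr {T} x.
Arguments frac_rep {T} x.
Arguments fracP {T} n d n' d'.

Lemma divB_gen (F0 : fieldType) (a b c e : F0) : b != 0 -> e != 0 -> a/b - c/e = (a*e - c*b)/(b*e).
Proof. by move=> hb he; field; rewrite hb he. Qed.
Arguments divB_gen {F0} a b c e.

Section Shift.
Variable C : fieldType.
Local Notation K := {fraction {poly C}}.

Definition shp (s : C) (p : {poly C}) := p \Po ('X + s%:P).

Lemma shpD s p q : shp s (p + q) = shp s p + shp s q.
Proof. by rewrite /shp comp_polyD. Qed.
Lemma shpB s p q : shp s (p - q) = shp s p - shp s q.
Proof. by rewrite /shp comp_polyB. Qed.
Lemma shpM s p q : shp s (p * q) = shp s p * shp s q.
Proof. by rewrite /shp comp_polyM. Qed.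
Lemma shpC s c : shp s c%:P = c%:P.
Proof. by rewrite /shp comp_polyC. Qed.
Lemma shpX s : shp s 'X = 'X + s%:P.
Proof. by rewrite /shp comp_polyX. Qed.
Lemma shp_comp s t p : shp s (shp t p) = shp (s + t) p.
Proof.
rewrite /shp -comp_polyA comp_polyD comp_polyX comp_polyC.
by rewrite polyCD addrA.
Qed.
Lemma shp0 p : shp 0 p = p.
Proof. by rewrite /shp addr0 comp_polyXr. Qed.
Lemma size_shp s p : size (shp s p) = size p.
Proof. by rewrite /shp size_comp_poly2 // size_XaddC. Qed.
Lemma shp_eq0 s p : (shp s p == 0) = (p == 0).
Proof. by rewrite -!size_poly_eq0 size_shp. Qed.
Lemma horner_shp s p z : (shp s p).[z] = p.[z + s].
Proof. by rewrite /shp horner_comp hornerD hornerX hornerC. Qed.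

Definition sig (s : C) (x : K) : K :=
  (shp s \n_(repr x))%:F / (shp s \d_(repr x))%:F.

Lemma sigE s n d : d != 0 -> sig s (n%:F / d%:F) = (shp s n)%:F / (shp s d)%:F.
Proof.
move=> hd; rewrite /sig.
set x := n%:F / d%:F.
have hx := frac_repr x.
have hd' : \d_(repr x) != 0 by exact: denom_ratioP.
have : (\n_(repr x))%:F / (\d_(repr x))%:F == n%:F / d%:F by rewrite -hx.
rewrite fracP // => /eqP e.
apply/eqP; rewrite fracP ?shp_eq0 //.
by rewrite -!shpM e.
Qed.

Arguments sigE s {n d}.

Lemma sig_tofrac s p : sig s p%:F = (shp s p)%:F.
Proof.
have := @sigE s p 1 (oner_neq0 _); rewrite tofrac1 !divr1 => ->.
by rewrite shpC tofrac1 divr1.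
Qed.

Lemma sig_is_zmod s : GRing.zmod_morphism (sig s).
Proof.
move=> x y.
have [n [d [hd ->]]] := frac_rep x.
have [n' [d' [hd' ->]]] := frac_rep y.
have hdF : d%:F != 0 :> K by rewrite tofrac_eq0.
have hdF' : d'%:F != 0 :> K by rewrite tofrac_eq0.
have e1 : n%:F / d%:F - n'%:F / d'%:F = (n * d' - n' * d)%:F / (d * d')%:F :> K.
  by rewrite (divB_gen _ _ _ _ hdF hdF') tofracB !tofracM.
have hdd : d * d' != 0 by rewrite mulf_neq0.
rewrite e1 (sigE s hdd) (sigE s hd) (sigE s hd') shpB !shpM.
have hsd : (shp s d)%:F != 0 :> K by rewrite tofrac_eq0 shp_eq0.
have hsd' : (shp s d')%:F != 0 :> K by rewrite tofrac_eq0 shp_eq0.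
by rewrite (divB_gen _ _ _ _ hsd hsd') tofracB !tofracM.
Qed.

Lemma sig_is_monoid s : GRing.monoid_morphism (sig s).
Proof.
split.
  by rewrite -tofrac1 sig_tofrac -polyC1 shpC.
move=> x y.
have [n [d [hd ->]]] := frac_rep x.
have [n' [d' [hd' ->]]] := frac_rep y.
have e1 : n%:F / d%:F * (n'%:F / d'%:F) = (n * n')%:F / (d * d')%:F :> K.
  by rewrite mulf_div !tofracM.
have hdd : d * d' != 0 by rewrite mulf_neq0.
rewrite e1 (sigE s hdd) (sigE s hd) (sigE s hd') !shpM.
by rewrite mulf_div !tofracM.
Qed.

HB.instance Definition _ (s : C) := GRing.isZmodMorphism.Build K K (sig s) (sig_is_zmod s).
HB.instance Definition _ (s : C) := GRing.isMonoidMorphism.Build K K (sig s) (sig_is_monoid s).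

Lemma sig_comp s t x : sig s (sig t x) = sig (s + t) x.
Proof.
have [n [d [hd ->]]] := frac_rep x.
have hd' : shp t d != 0 by rewrite shp_eq0.
by rewrite (sigE t hd) (sigE s hd') (sigE (s + t) hd) shp_comp shp_comp.
Qed.

Lemma sig0 x : sig 0 x = x.
Proof.
have [n [d [hd ->]]] := frac_rep x.
by rewrite (sigE 0 hd) !shp0.
Qed.

Lemma sigC s c : sig s (c%:P)%:F = (c%:P)%:F.
Proof. by rewrite sig_tofrac shpC. Qed.

Lemma map_sig_comp s t (p : {poly K}) :
  map_poly (sig s) (map_poly (sig t) p) = map_poly (sig (s + t)) p.
Proof.
rewrite -map_poly_comp; apply: eq_map_poly => x /=; exact: sig_comp.
Qed.

Lemma map_sig0 (p : {poly K}) : map_poly (sig 0) p = p.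
Proof. rewrite (eq_map_poly sig0); exact: map_poly_id. Qed.

End Shift.
Arguments sig {C} s x.
Arguments shp {C} s p.
Arguments sigE {C} s {n d}.

Lemma many_roots (C : idomainType) (Q : {poly C}) (f : nat -> C) :
  injective f -> (forall k, root Q (f k)) -> Q = 0.
Proof.
move=> finj hr; apply/eqP; apply: contraT => hQ.
have := max_poly_roots hQ (rs := map f (iota 0 (size Q))).
rewrite size_map size_iota ltnn; apply.
  by apply/allP => z /mapP [k _ ->]; exact: hr.
by rewrite map_inj_uniq // iota_uniq.
Qed.

Section Periodic.
Variable C : numFieldType.
Local Notation K := {fraction {poly C}}.

Lemma sig_periodic (t : C) (x : K) : t != 0 -> sig t x = x ->
  exists c : C, x = (c%:P)%:F.
Proof.
have [n [d [hd ->]]] := frac_rep x; move=> ht hper.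
have hk : forall k, sig (t *+ k) (n%:F/d%:F) = n%:F/d%:F.
  elim => [|k IH]; first by rewrite mulr0n sig0.
  by rewrite mulrS -sig_comp IH.
have hk2 : forall k, shp (t *+ k) n * d = n * shp (t *+ k) d.
  move=> k; apply/eqP; rewrite -fracP ?shp_eq0 //.
  by rewrite -(sigE _ hd) hk.
have [z0 hz0] : exists z0, d.[z0] != 0.
  apply: NNPP => hn; move/negP: hd; apply; apply/eqP.
  apply: (@many_roots _ _ (fun k : nat => k%:R)).
    by move=> i j /eqP; rewrite eqr_nat => /eqP.
  move=> k; rewrite /root; apply: contraT => hz; exfalso; apply: hn; by exists k%:R.
set Q := d.[z0] *: n - n.[z0] *: d.
have hQ : Q = 0.
  apply: (@many_roots _ _ (fun k => z0 + t *+ k)).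
    by move=> i j /addrI; exact: mulrIn.
  move=> k; rewrite /root /Q hornerD hornerN !hornerZ.
  have := congr1 (fun p => p.[z0]) (hk2 k); rewrite /= !hornerM !horner_shp => e.
  by rewrite mulrC e mulrC subrr.
exists (n.[z0] / d.[z0]).
have hn : n = (n.[z0] / d.[z0]) *: d.
  move/eqP: hQ; rewrite subr_eq0 => /eqP e.
  by rewrite mulrC -scalerA -e scalerA mulVf // scale1r.
have hdF : d%:F != 0 :> K by rewrite tofrac_eq0.
by rewrite {1}hn -mul_polyC tofracM mulfK.
Qed.
End Periodic.

End PBm.
Import PBm.

Module PCm.
Import GRing.Theory Num.Theory.
Local Open Scope ring_scope.

Section Main.
Variable R : realType.
Local Notation C := R[i].
Local Notation K := {fraction {poly C}}.
Variable W : lmodType C.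
Variables (E F H : {linear W -> W}) (act : K -> W -> W).
Hypothesis Hsl2 : is_sl2_module E F H.
Hypothesis Hcz : is_Cz_structure H act.

Lemma act_lin a c v w : act a (c *: v + w) = c *: act a v + act a w.
Proof. by case: Hcz. Qed.
Lemma actDl a b v : act (a + b) v = act a v + act b v.
Proof. by case: Hcz. Qed.
Lemma actM a b v : act (a * b) v = act a (act b v).
Proof. by case: Hcz. Qed.
Lemma act1 v : act 1 v = v.
Proof. by case: Hcz. Qed.
Lemma act_poly p v : act p%:F v = peval p (L0 H) v.
Proof. by case: Hcz. Qed.

Lemma act0r a : act a 0 = 0.
Proof.
have e := act_lin a 1 0 0.
rewrite scale1r scale1r addr0 in e.
by apply: (@addrI _ (act a 0)); rewrite addr0 -{1}e.
Qed.
Lemma actDr a v w : act a (v + w) = act a v + act a w.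
Proof. by rewrite -{1}[v]scale1r act_lin scale1r. Qed.
Lemma actZr a c v : act a (c *: v) = c *: act a v.
Proof. by rewrite -[c *: v]addr0 act_lin act0r addr0. Qed.
Lemma act0l v : act 0 v = 0.
Proof.
have := actDl 0 0 v; rewrite addr0 => e.
by apply: (@addrI _ (act 0 v)); rewrite addr0; exact: esym e.
Qed.
Lemma actNl a v : act (- a) v = - act a v.
Proof. by apply/eqP; rewrite -addr_eq0 -actDl addNr act0l. Qed.
Lemma actNr a v : act a (- v) = - act a v.
Proof. by rewrite -scaleN1r actZr scaleN1r. Qed.
Lemma actBl a b v : act (a - b) v = act a v - act b v.
Proof. by rewrite actDl actNl. Qed.
Lemma actBr a v w : act a (v - w) = act a v - act a w.
Proof. by rewrite actDr actNr. Qed.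
Lemma act_sumr a (I : Type) (r : seq I) (P : pred I) (G : I -> W) :
  act a (\sum_(i <- r | P i) G i) = \sum_(i <- r | P i) act a (G i).
Proof. exact: (big_morph _ (actDr a) (act0r a)). Qed.
Lemma act_suml (I : Type) (r : seq I) (P : pred I) (G : I -> K) v :
  act (\sum_(i <- r | P i) G i) v = \sum_(i <- r | P i) act (G i) v.
Proof. exact: (big_morph (fun a => act a v) (fun a b => actDl a b v) (act0l v)). Qed.

Lemma actC c v : act (c%:P)%:F v = c *: v.
Proof.
rewrite act_poly /peval size_polyC.
have [->|hc] := eqVneq c 0; first by rewrite big_ord0 scale0r.
by rewrite big_ord1 coefC /=.
Qed.
Lemma actX v : act 'X%:F v = L0 H v.
Proof.
rewrite act_poly /peval size_polyX !big_ord_recl big_ord0 /= !coefX /=.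
by rewrite scale0r add0r scale1r addr0.
Qed.
Lemma actXs s v : act ('X + s%:P)%:F v = L0 H v + s *: v.
Proof. by rewrite tofracD actDl actX actC. Qed.

Lemma actV a v : a != 0 -> act a^-1 (act a v) = v.
Proof. by move=> ha; rewrite -actM mulVf // act1. Qed.
Lemma act_inj a v : a != 0 -> act a v = 0 -> v = 0.
Proof. by move=> ha e; rewrite -(@actV a v ha) e act0r. Qed.

Lemma two_neq0 : (2%:R : C) != 0.
Proof. by rewrite pnatr_eq0. Qed.

Definition hK : K := ((- 2%:R)%:P)%:F * 'X%:F.
Lemma actH v : act hK v = H v.
Proof.
rewrite /hK actM actC actX /L0 scalerN scaleNr opprK scalerA.
by rewrite mulfV ?two_neq0 // scale1r.
Qed.

Lemma semilin (T : {linear W -> W}) (s : C) :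
  (forall v, T (L0 H v) = L0 H (T v) + s *: T v) ->
  forall a v, T (act a v) = act (sig s a) (T v).
Proof.
move=> hT.
have hp : forall p v, T (act p%:F v) = act (shp s p)%:F (T v).
  elim/poly_ind => [|p c IH] v.
    by rewrite tofrac0 act0l linear0 /shp comp_poly0 tofrac0 act0l.
  rewrite tofracD tofracM actDl actM actX actC linearD linearZ /= IH hT.
  rewrite shpD shpM shpX shpC tofracD tofracM actDl actM actC actXs.
  by rewrite actDr actZr.
move=> a v.
have [n [d [hd ->]]] := frac_rep a.
rewrite (sigE s hd).
set u := act (n%:F / d%:F) v.
have hdF : d%:F != 0 :> K by rewrite tofrac_eq0.
have hu : act d%:F u = act n%:F v by rewrite /u -actM mulrC divfK.
have hsd : (shp s d)%:F != 0 :> K by rewrite tofrac_eq0 shp_eq0.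
have := congr1 T hu; rewrite !hp => e.
by rewrite mulrC actM -e actV.
Qed.

Lemma E_L0 v : E (L0 H v) = L0 H (E v) + 1 *: E v.
Proof.
case: Hsl2 => hE _ _.
have e : E (H v) = H (E v) - 2%:R *: E v.
  by rewrite -(hE v) opprB addrC subrK.
rewrite /L0 linearN linearZ /= e scalerBr scalerA mulVf ?two_neq0 //.
by rewrite opprB addrC.
Qed.

Lemma F_L0 v : F (L0 H v) = L0 H (F v) + (-1) *: F v.
Proof.
case: Hsl2 => _ hF _.
have e : F (H v) = H (F v) + 2%:R *: F v.
  by rewrite -[X in _ + X]opprK -(hF v) opprB addrC subrK.
rewrite /L0 linearN linearZ /= e scalerDr scalerA mulVf ?two_neq0 //.
by rewrite opprD scale1r scaleN1r.
Qed.


Variable phi : {linear W -> W}.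
Hypothesis Hphi : sl2_endo E F H phi.

Lemma phi_L0 v : phi (L0 H v) = L0 H (phi v) + 0 *: phi v.
Proof.
case: Hphi => _ _ hH.
by rewrite scale0r addr0 /L0 linearN linearZ /= hH.
Qed.

Lemma phi_act a v : phi (act a v) = act a (phi v).
Proof. by rewrite (@semilin phi 0 phi_L0) sig0. Qed.

Lemma E_semi a v : E (act a v) = act (sig 1 a) (E v).
Proof. exact: (@semilin E 1 E_L0). Qed.
Lemma F_semi a v : F (act a v) = act (sig (-1) a) (F v).
Proof. exact: (@semilin F (-1) F_L0). Qed.
Lemma E_phi v : E (phi v) = phi (E v).
Proof. by case: Hphi => [h _ _]; rewrite h. Qed.
Lemma F_phi v : F (phi v) = phi (F v).
Proof. by case: Hphi => [_ h _]; rewrite h. Qed.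

End Main.

End PCm.
Import PCm.

Module PDm.
Import GRing.Theory Num.Theory.
Local Open Scope ring_scope.

Section Core.
Variable R : realType.
Local Notation C := R[i].
Variable Kf : fieldType.
Variable W : lmodType C.
Variable act : Kf -> W -> W.
Hypothesis act_lin : forall a c v w, act a (c *: v + w) = c *: act a v + act a w.
Hypothesis actDl : forall a b v, act (a + b) v = act a v + act b v.
Hypothesis actM : forall a b v, act (a * b) v = act a (act b v).
Hypothesis act1 : forall v, act 1 v = v.

Lemma act0r a : act a 0 = 0.
Proof.
have e := act_lin a 1 0 0.
rewrite scale1r scale1r addr0 in e.
by apply: (@addrI _ (act a 0)); rewrite addr0 -{1}e.
Qed.
Lemma actDr a v w : act a (v + w) = act a v + act a w.
Proof. by rewrite -{1}[v]scale1r act_lin scale1r. Qed.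
Lemma actZr a c v : act a (c *: v) = c *: act a v.
Proof. by rewrite -[c *: v]addr0 act_lin act0r addr0. Qed.
Lemma act0l v : act 0 v = 0.
Proof.
have e := actDl 0 0 v; rewrite addr0 in e.
by apply: (@addrI _ (act 0 v)); rewrite addr0 -{1}e.
Qed.
Lemma actNl a v : act (- a) v = - act a v.
Proof. by apply/eqP; rewrite -addr_eq0 -actDl addNr act0l. Qed.
Lemma actNr a v : act a (- v) = - act a v.
Proof. by rewrite -scaleN1r actZr scaleN1r. Qed.
Lemma actBl a b v : act (a - b) v = act a v - act b v.
Proof. by rewrite actDl actNl. Qed.
Lemma actBr a v w : act a (v - w) = act a v - act a w.
Proof. by rewrite actDr actNr. Qed.
Lemma act_sumr a (I : Type) (r : seq I) (P : pred I) (G : I -> W) :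
  act a (\sum_(i <- r | P i) G i) = \sum_(i <- r | P i) act a (G i).
Proof. exact: (big_morph _ (actDr a) (act0r a)). Qed.
Lemma act_suml (I : Type) (r : seq I) (P : pred I) (G : I -> Kf) v :
  act (\sum_(i <- r | P i) G i) v = \sum_(i <- r | P i) act (G i) v.
Proof. exact: (big_morph (fun a => act a v) (fun a b => actDl a b v) (act0l v)). Qed.
Lemma actV a v : a != 0 -> act a^-1 (act a v) = v.
Proof. by move=> ha; rewrite -actM mulVf // act1. Qed.
Lemma act_inj a v : a != 0 -> act a v = 0 -> v = 0.
Proof. by move=> ha e; rewrite -(@actV a v ha) e act0r. Qed.

Variable phi : {linear W -> W}.
Hypothesis phi_act : forall a v, phi (act a v) = act a (phi v).

Fixpoint pevs (s : seq Kf) (v : W) : W :=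
  if s is a :: s' then act a v + phi (pevs s' v) else 0.
Definition Pev (p : {poly Kf}) v := pevs p v.

Lemma Pev0 v : Pev 0 v = 0.
Proof. by rewrite /Pev polyseq0. Qed.
Lemma pevs_nil v : pevs [::] v = 0. Proof. by []. Qed.
Lemma pevs_cons a s v : pevs (a :: s) v = act a v + phi (pevs s v). Proof. by []. Qed.

Lemma Pev_cons a p v : Pev (p * 'X + a%:P) v = act a v + phi (Pev p v).
Proof.
rewrite -cons_poly_def /Pev polyseq_cons.
case: (nilp p) / idP => hp.
  have hp' : polyseq p = [::] by apply/nilP.
  change (pevs a%:P v = act a v + phi (pevs p v)).
  rewrite hp' pevs_nil linear0 addr0.
  have [->|ha] := eqVneq a 0; first by rewrite polyseqC eqxx act0l.
  have e : polyseq a%:P = [:: a] by rewrite polyseqC ha.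
  by rewrite e pevs_cons pevs_nil linear0 addr0.
change (pevs (a :: p) v = act a v + phi (pevs p v)).
by rewrite pevs_cons.
Qed.

Lemma Pev_mulX p v : Pev (p * 'X) v = phi (Pev p v).
Proof. by have := Pev_cons 0 p v; rewrite polyC0 addr0 act0l add0r. Qed.

Lemma Pev_C c v : Pev c%:P v = act c v.
Proof. by have := Pev_cons c 0 v; rewrite mul0r add0r Pev0 linear0 addr0. Qed.

Lemma Pev_v0 p : Pev p 0 = 0.
Proof.
elim/poly_ind: p => [|p c IH]; first by rewrite Pev0.
by rewrite Pev_cons IH act0r linear0 addr0.
Qed.

Lemma Pev_vD p v w : Pev p (v + w) = Pev p v + Pev p w.
Proof.
elim/poly_ind: p => [|p c IH]; first by rewrite !Pev0 addr0.
by rewrite !Pev_cons IH actDr linearD addrACA.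
Qed.

Lemma Pev_vact p a v : Pev p (act a v) = act a (Pev p v).
Proof.
elim/poly_ind: p => [|p c IH]; first by rewrite !Pev0 act0r.
by rewrite !Pev_cons IH actDr phi_act -!actM mulrC.
Qed.

Lemma Pev_vphi p v : Pev p (phi v) = phi (Pev p v).
Proof.
elim/poly_ind: p => [|p c IH]; first by rewrite !Pev0 linear0.
by rewrite !Pev_cons IH linearD phi_act.
Qed.

Lemma Pev_add p q v : Pev (p + q) v = Pev p v + Pev q v.
Proof.
elim/poly_ind: p q => [|p a IH] q; first by rewrite add0r Pev0 add0r.
elim/poly_ind: q => [|q b _]; first by rewrite addr0 Pev0 addr0.
have -> : p * 'X + a%:P + (q * 'X + b%:P) = (p + q) * 'X + (a + b)%:P.
  by rewrite mulrDl polyCD addrACA.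
by rewrite !Pev_cons IH actDl linearD addrACA.
Qed.

Lemma Pev_Cmul c q v : Pev (c%:P * q) v = act c (Pev q v).
Proof.
elim/poly_ind: q => [|q b IH]; first by rewrite mulr0 Pev0 act0r.
have -> : c%:P * (q * 'X + b%:P) = (c%:P * q) * 'X + (c * b)%:P.
  by rewrite mulrDr mulrA polyCM.
by rewrite !Pev_cons IH actM actDr phi_act.
Qed.

Lemma Pev_mul p q v : Pev (p * q) v = Pev p (Pev q v).
Proof.
elim/poly_ind: p => [|p a IH]; first by rewrite mul0r !Pev0.
rewrite mulrDl mulrAC Pev_add Pev_mulX IH Pev_Cmul Pev_cons.
by rewrite addrC.
Qed.

Lemma Pev1 v : Pev 1 v = v.
Proof. by rewrite -polyC1 Pev_C act1. Qed.

Lemma Pev_XsubC c v : Pev ('X - c%:P) v = phi v - act c v.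
Proof.
have := Pev_cons (- c) 1 v; rewrite mul1r polyCN Pev1 actNl => ->.
by rewrite addrC.
Qed.

Lemma Pev_scale c p v : Pev (c *: p) v = act c (Pev p v).
Proof. by rewrite -mul_polyC Pev_Cmul. Qed.

Lemma Pev_semilin (T : {linear W -> W}) (f : {rmorphism Kf -> Kf}) :
  (forall a v, T (act a v) = act (f a) (T v)) ->
  (forall v, T (phi v) = phi (T v)) ->
  forall p v, T (Pev p v) = Pev (map_poly f p) (T v).
Proof.
move=> hT hTp; elim/poly_ind => [|p a IH] v.
  by rewrite map_poly0 !Pev0 linear0.
rewrite rmorphD rmorphM /= map_polyX map_polyC /= !Pev_cons.
by rewrite linearD hT hTp IH.
Qed.


Lemma pevs_sum s v : pevs s v = \sum_(i < size s) act (nth 0 s i) (iter i phi v).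
Proof.
elim: s => [|a s IH]; first by rewrite pevs_nil big_ord0.
rewrite pevs_cons IH big_ord_recl /= linear_sum; congr (_ + _).
by apply: eq_bigr => i _; rewrite phi_act.
Qed.

Lemma Pev_sum p v : Pev p v = \sum_(i < size p) act p`_i (iter i phi v).
Proof. exact: pevs_sum. Qed.

Lemma Pev_poly N (c : nat -> Kf) v :
  Pev (\poly_(i < N) c i) v = \sum_(i < N) act (c i) (iter i phi v).
Proof.
rewrite Pev_sum (big_ord_widen N (fun i => act (\poly_(i < N) c i)`_i (iter i phi v)) (size_poly N c)).
rewrite big_mkcond; apply: eq_bigr => i _.
case: ltnP => h; first by rewrite coef_poly ltn_ord.
have := nth_default 0 h; rewrite coef_poly ltn_ord => ->.
by rewrite act0l.
Qed.

Lemma Pev_vsum p (I : Type) (r : seq I) (P : pred I) (G : I -> W) :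
  Pev p (\sum_(i <- r | P i) G i) = \sum_(i <- r | P i) Pev p (G i).
Proof. exact: (big_morph _ (Pev_vD p) (Pev_v0 p)). Qed.

Hypothesis findim : exists n (w : 'I_n -> W),
  forall v, exists c : 'I_n -> Kf, v = \sum_(i < n) act (c i) (w i).

Lemma ann_all : exists p, p != 0 /\ forall v, Pev p v = 0.
Proof.
have [n [w hw]] := findim.
have coord u : {c : 'I_n -> Kf | u = \sum_(i < n) act (c i) (w i)}.
  exact: constructive_indefinite_description (hw u).
have ann_vec u : exists p, p != 0 /\ Pev p u = 0.
  pose M : 'M[Kf]_(n.+1, n) := \matrix_(j, k) sval (coord (iter j phi u)) k.
  have hk : kermx M != 0.
    rewrite kermx_eq0 /row_free; apply/negP => /eqP hr.
    by have := rank_leq_col M; rewrite hr ltnn.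
  have [i hi] : exists i, row i (kermx M) != 0.
    apply: NNPP => hn; move/negP: hk; apply; apply/eqP/row_matrixP => i.
    rewrite row0; apply/eqP; apply: contraT => h; exfalso; apply: hn; by exists i.
  set x := row i (kermx M) in hi.
  have hx : x *m M = 0 by apply/sub_kermxP; exact: row_sub.
  have [j hj] : exists j, x 0 j != 0.
    apply: NNPP => hn; move/negP: hi; apply; apply/eqP/rowP => j.
    rewrite [RHS]mxE; apply/eqP; apply: contraT => h; exfalso; apply: hn; by exists j.
  exists (\poly_(j < n.+1) x 0 (inord j)); split.
    apply/eqP => h; move/eqP: hj; apply.
    by have := congr1 (fun q : {poly Kf} => q`_j) h; rewrite coef_poly ltn_ord coef0 inord_val.
  rewrite Pev_poly (eq_bigr (fun j : 'I_n.+1 => act (x 0 j) (iter j phi u))); last first.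
    by move=> j' _; rewrite inord_val.
  have e : forall j : 'I_n.+1, iter j phi u = \sum_(k < n) act (M j k) (w k).
    by move=> j'; rewrite (svalP (coord (iter j' phi u))); apply: eq_bigr => k _; rewrite mxE.
  under eq_bigr => j' _ do rewrite e act_sumr.
  under eq_bigr => j' _ do under eq_bigr => k _ do rewrite -actM.
  rewrite exchange_big /=; apply: big1 => k _.
  rewrite -act_suml.
  have := congr1 (fun y : 'rV[Kf]_n => y 0 k) hx; rewrite !mxE => ->.
  by rewrite act0l.
pose pv (k : 'I_n) := xchoose (ex_intro (fun p => (p != 0) && (Pev p (w k) == 0)) _ _).
have pvP : forall k, exists p, (p != 0) && (Pev p (w k) == 0).
  move=> k; have [p [h1 h2]] := ann_vec (w k); exists p; by rewrite h1 h2 eqxx.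
pose pk (k : 'I_n) := xchoose (pvP k).
have pkP : forall k, (pk k != 0) && (Pev (pk k) (w k) == 0) := fun k => xchooseP (pvP k).
exists (\prod_(k < n) pk k); split.
  by apply/prodf_neq0 => k _; case/andP: (pkP k).
move=> v; have [c ->] := hw v.
rewrite Pev_vsum; apply: big1 => k _.
rewrite Pev_vact (bigD1 k) //= mulrC Pev_mul.
by case/andP: (pkP k) => _ /eqP ->; rewrite Pev_v0 act0r.
Qed.

Definition annih (p : {poly Kf}) := forall v, Pev p v = 0.
Definition Irr (q : {poly Kf}) := forall p, coprimep q p \/ q %| p.

Lemma bezout_kill p m w : coprimep p m -> annih m -> Pev p w = 0 -> w = 0.
Proof.
move=> /Bezout_coprimepP [[u1 u2] /= hu] hm hp.
set g := u1 * p + u2 * m in hu.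
have hs : size g = 1%N by rewrite (eqp_size hu) size_poly1.
have hg : g = (g`_0)%:P by apply: size1_polyC; rewrite hs.
have hg0 : g`_0 != 0.
  apply/negP => /eqP h; move: hs; rewrite hg h size_polyC eqxx; done.
apply: (@act_inj _ _ hg0).
rewrite -Pev_C -hg /g Pev_add !Pev_mul hp hm !Pev_v0 addr0; done.
Qed.

Lemma ex_min_ann : exists m : {poly Kf}, [/\ m != 0, annih m &
  forall r : {poly Kf}, r != 0 -> (size r < size m)%N -> exists u, Pev r u != 0].
Proof.
have [p0 [hp0 ha0]] := ann_all.
suff main : forall n (p : {poly Kf}), (size p <= n)%N -> p != 0 -> annih p ->
    exists m : {poly Kf}, [/\ m != 0, annih m &
      forall r : {poly Kf}, r != 0 -> (size r < size m)%N -> exists u, Pev r u != 0].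
  exact: main _ p0 (leqnn _) hp0 ha0.
elim => [|n IH] p hs hp ha.
  by move: hp; rewrite -size_poly_eq0; move: hs; rewrite leqn0 => /eqP ->.
case: (classic (exists r : {poly Kf}, [/\ r != 0, annih r & (size r < size p)%N])).
  move=> [r [hr har hsr]]; apply: (IH r _ hr har).
  by rewrite -ltnS; apply: leq_trans hsr hs.
move=> hn; exists p; split => // r hr hsr.
apply: NNPP => hu; apply: hn; exists r; split => // v.
apply/eqP; apply: NNPP => hv; apply: hu; exists v; exact/negP.
Qed.

Lemma ex_irr (m : {poly Kf}) : m != 0 -> annih m ->
  (forall r : {poly Kf}, r != 0 -> (size r < size m)%N -> exists u, Pev r u != 0) ->
  (exists w : W, w != 0) ->
  exists (q : {poly Kf}) (v0 : W), [/\ q \is monic, (1 < size q)%N, Irr q, v0 != 0 & Pev q v0 = 0].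
Proof.
move=> hm ham hmin [w hw].
have hsm : (1 < size m)%N.
  rewrite ltnNge; apply/negP => hs.
  have hc := size1_polyC hs.
  have hc0 : m`_0 != 0 by apply: contraNneq hm => h; rewrite hc h.
  move/negP: hw; apply; apply/eqP; apply: (@act_inj _ _ hc0).
  by rewrite -Pev_C -hc ham.
have : exists d : {poly Kf}, [/\ d %| m, (1 < size d)%N & (size d <= size m)%N].
  by exists m; rewrite dvdpp leqnn.
have main : forall n (d : {poly Kf}), (size d <= n)%N -> d %| m -> (1 < size d)%N ->
    exists q : {poly Kf}, [/\ q %| m, (1 < size q)%N &
      forall g : {poly Kf}, g %| m -> (1 < size g)%N -> (size q <= size g)%N].
  elim => [|n IH] d hsd hdm hd1; first by move: hsd hd1; rewrite leqn0 => /eqP ->.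
  case: (classic (exists g : {poly Kf}, [/\ g %| m, (1 < size g)%N & (size g < size d)%N])).
    move=> [g [hgm hg1 hgs]]; apply: (IH g) => //.
    by rewrite -ltnS; apply: leq_trans hgs hsd.
  move=> hn; exists d; split => // g hgm hg1.
  rewrite leqNgt; apply/negP => hgs; apply: hn; by exists g.
move=> [d [hdm hd1 hds]].
have [q0 [hq0m hq01 hq0min]] := main _ _ hds hdm hd1.
have hq00 : q0 != 0 by rewrite -size_poly_eq0 -lt0n; apply: ltn_trans hq01.
have hlc : lead_coef q0 != 0 by rewrite lead_coef_eq0.
set q := (lead_coef q0)^-1 *: q0.
have hqq0 : q %= q0 by rewrite eqp_scale // invr_eq0.
have hqm : q %| m by rewrite (eqp_dvdl _ hqq0).
have hsq : size q = size q0 by apply: eqp_size.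
have hq0 : q != 0 by rewrite -size_poly_eq0 hsq size_poly_eq0.
have hirr : Irr q.
  move=> p; set g := gcdp q p.
  have hgq : g %| q by exact: dvdp_gcdl.
  have hg0 : g != 0 by rewrite gcdp_eq0 negb_and hq0.
  case: (eqVneq (size g) 1%N) => hg1; first by left; rewrite /coprimep hg1.
  right.
  have hg2 : (1 < size g)%N.
    by rewrite ltn_neqAle eq_sym hg1 /= lt0n size_poly_eq0.
  have hle1 := hq0min g (dvdp_trans hgq hqm) hg2.
  have hle2 := dvdp_leq hq0 hgq.
  have heq : g %= q by rewrite -dvdp_size_eqp // hsq eqn_leq hle1 -hsq hle2.
  by rewrite -(eqp_dvdl _ heq) dvdp_gcdr.
set r := m %/ q.
have hmr : r * q = m by rewrite /r divpK.
have hr0 : r != 0 by apply: contraNneq hm => h; rewrite -hmr h mul0r.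
have hsr : (size r < size m)%N.
  rewrite -hmr size_mul // hsq.
  rewrite -(prednK (ltnW hq01)) addnS /= -{1}[size r]addn0 ltn_add2l -subn1 subn_gt0 //.
have [u hu] := hmin r hr0 hsr.
exists q, (Pev r u); split => //.
- by rewrite monicE /q lead_coefZ mulVf.
- by rewrite hsq.
- by rewrite -Pev_mul mulrC hmr ham.
Qed.

Variable sg : C -> {rmorphism Kf -> Kf}.
Hypothesis sg_comp : forall s t x, sg s (sg t x) = sg (s + t) x.
Hypothesis sg0 : forall x, sg 0 x = x.

Lemma map_sg_comp s t (p : {poly Kf}) :
  map_poly (sg s) (map_poly (sg t) p) = map_poly (sg (s + t)) p.
Proof. rewrite -map_poly_comp; apply: eq_map_poly => x /=; exact: sg_comp. Qed.

Lemma map_sg0 (p : {poly Kf}) : map_poly (sg 0) p = p.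
Proof. rewrite (eq_map_poly sg0); exact: map_poly_id. Qed.

Lemma Irr_map s q : Irr q -> Irr (map_poly (sg s) q).
Proof.
move=> hq p.
have hp : p = map_poly (sg s) (map_poly (sg (- s)) p) by rewrite map_sg_comp subrr map_sg0.
rewrite hp coprimep_map dvdp_map; exact: hq.
Qed.

Lemma iter_Pev (T : {linear W -> W}) (s : C) (q : {poly Kf}) v0 :
  (forall a v, T (act a v) = act (sg s a) (T v)) -> (forall v, T (phi v) = phi (T v)) ->
  Pev q v0 = 0 -> forall j, Pev (map_poly (sg (s *+ j)) q) (iter j T v0) = 0.
Proof.
move=> hT hTp hq; elim => [|j IH]; first by rewrite mulr0n map_sg0.
rewrite iterS mulrS -map_sg_comp -(@Pev_semilin T (sg s) hT hTp) IH; exact: linear0.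
Qed.

Lemma chain (T : {linear W -> W}) (s : C) (m q : {poly Kf}) v0 :
  s != 0 -> (forall a v, T (act a v) = act (sg s a) (T v)) ->
  (forall v, T (phi v) = phi (T v)) ->
  m != 0 -> annih m -> q \is monic -> (1 < size q)%N -> Irr q -> Pev q v0 = 0 ->
  (exists j, iter j T v0 = 0) \/ (exists t, t != 0 /\ map_poly (sg t) q = q).
Proof.
move=> hs hT hTp hm ham hmon hq1 hirr hq.
case: (classic (exists j, iter j T v0 = 0)) => [h|hn]; [by left|right].
apply: NNPP => hp.
pose qj j := map_poly (sg (s *+ j)) q.
have hPev j : Pev (qj j) (iter j T v0) = 0 by exact: iter_Pev.
have hirrj j : Irr (qj j) by exact: Irr_map.
have hmonj j : qj j \is monic by rewrite map_monic.
have hsizej j : size (qj j) = size q by rewrite size_map_poly.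
have hdiv j : qj j %| m.
  case: (hirrj j m) => // hc; exfalso; apply: hn; exists j.
  exact: (@bezout_kill _ _ _ hc ham (hPev j)).
have hcop i j : (i < j)%N -> coprimep (qj i) (qj j).
  move=> hij; case: (hirrj i (qj j)) => // hd; exfalso; apply: hp.
  have he : qj i %= qj j by rewrite -dvdp_size_eqp // !hsizej.
  rewrite eqp_monic // in he; move/eqP: he => he.
  exists (s *+ j - s *+ i); split.
    have hji : (i <= j)%N by apply: ltnW.
    rewrite -(mulrnBr s hji) mulrn_eq0 negb_or subn_eq0 -ltnNge hij; exact: hs.
  have := congr1 (map_poly (sg (- (s *+ i)))) he.
  by rewrite /qj !map_sg_comp addNr map_sg0 addrC => <-.
have hq0 : q != 0 by apply: monic_neq0.
have hsq : (1 <= size q)%N by rewrite lt0n size_poly_eq0.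
pose Pk k := (\prod_(j < k) qj j)%R.
have main : forall k, [/\ Pk k %| m,
    (k.+1 <= size (Pk k))%N &
    forall l, (k <= l)%N -> coprimep (Pk k) (qj l)].
  elim => [|k [IH1 IH2 IH3]].
    rewrite /Pk big_ord0 dvd1p size_poly1; split => // l _; exact: coprime1p.
  have hc := IH3 k (leqnn k).
  rewrite /Pk big_ord_recr /= -/(Pk k); split.
  - by rewrite Gauss_dvdp // IH1 hdiv.
  - have hP0 : Pk k != 0.
      by rewrite -size_poly_eq0 -lt0n; apply: leq_trans IH2.
    have hqk0 : qj k != 0 by apply: monic_neq0.
    rewrite size_mul // hsizej.
    move: IH2 hq1; set a := size (Pk k); set b := size q; lia.
  - move=> l hl; rewrite coprimepMl IH3 ?(ltnW hl) //=.
    by apply: hcop.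
have [H1 H2 _] := main (size m).
have := dvdp_leq hm H1; rewrite leqNgt; move/negP; apply.
exact: H2.
Qed.

Variable gam : {rmorphism C -> Kf}.
Hypothesis act_gam : forall c v, act (gam c) v = c *: v.
Variable zK : Kf.
Hypothesis sg_z : forall s, sg s zK = zK + gam s.
Hypothesis zK_notc : forall c, zK != gam c.
Variables E F : {linear W -> W}.
Hypothesis E_semi : forall a v, E (act a v) = act (sg 1 a) (E v).
Hypothesis F_semi : forall a v, F (act a v) = act (sg (-1) a) (F v).
Hypothesis E_phi : forall v, E (phi v) = phi (E v).
Hypothesis F_phi : forall v, F (phi v) = phi (F v).
Hypothesis EF_H : forall v, E (F v) = F (E v) + act (gam (-2) * zK) v.
Hypothesis sg_periodic : forall t x, t != 0 -> sg t x = x -> exists c, x = gam c.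

Definition rK (j : nat) : Kf := j%:R * (j%:R - 1) - (2 * j%:R) * zK.

Lemma gamN2 : gam (-2) = - 2%:R.
Proof. by rewrite rmorphN rmorph_nat. Qed.

Lemma rK_step j : sg (-1) (rK j.+1) + gam (-2) * zK = rK j.+2.
Proof.
rewrite /rK rmorphB !rmorphM rmorphB !rmorph_nat rmorph1 sg_z rmorphN rmorph1 gamN2.
rewrite -!natr1; ring.
Qed.

Lemma rK1 : rK 1 = gam (-2) * zK.
Proof. by rewrite /rK gamN2; ring. Qed.

Lemma natK_neq0 n : (n.+1%:R : Kf) != 0.
Proof. by rewrite -(rmorph_nat gam) fmorph_eq0 pnatr_eq0. Qed.

Lemma rK_neq0 j : rK j.+1 != 0.
Proof.
have e : rK j.+1 = j.+1%:R * (j%:R - 2%:R * zK) by rewrite /rK -natr1; ring.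
rewrite e mulf_eq0 negb_or natK_neq0 /=.
apply/negP => /eqP h.
have h2 : (2%:R : Kf) != 0 by exact: (natK_neq0 1).
move/negP: (zK_notc (j%:R / 2%:R)); apply; apply/eqP.
rewrite fmorph_div !rmorph_nat.
apply: (mulfI h2); rewrite [RHS]mulrC divfK //.
by apply/eqP; rewrite eq_sym -subr_eq0 h.
Qed.

Lemma EF_iter v : E v = 0 -> forall j, E (iter j.+1 F v) = act (rK j.+1) (iter j F v).
Proof.
move=> hv; elim => [|j IH].
  by rewrite /= EF_H hv linear0 add0r rK1.
rewrite iterS EF_H IH F_semi -actDl rK_step; done.
Qed.

Lemma lemmaX v : E v = 0 -> forall N, iter N F v = 0 -> v = 0.
Proof.
move=> hv; elim => [//|N IH] hN; apply: IH.
apply: (@act_inj (rK N.+1)); first exact: rK_neq0.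
by rewrite -EF_iter // hN linear0.
Qed.

Lemma eigen_of_periodic (m q : {poly Kf}) : m != 0 -> annih m ->
  (forall r : {poly Kf}, r != 0 -> (size r < size m)%N -> exists u, Pev r u != 0) ->
  q %| m -> (1 < size q)%N -> forall t, t != 0 -> map_poly (sg t) q = q ->
  exists c (w : W), w != 0 /\ phi w = c *: w.
Proof.
move=> hm ham hmin hqm hq1 t ht hper.
have hc : forall i, exists c, q`_i == gam c.
  move=> i; have := congr1 (fun p : {poly Kf} => p`_i) hper; rewrite coef_map /=.
  by move=> /(sg_periodic _ _ ht) [c ->]; exists c.
pose cf i := xchoose (hc i).
pose q' := \poly_(i < size q) cf i.
have hmap : map_poly gam q' = q.
  apply/polyP => i; rewrite coef_map coef_poly; case: ltnP => h.
    by rewrite (eqP (xchooseP (hc i))).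
  by rewrite /= rmorph0 nth_default.
have hs' : size q' != 1%N.
  by rewrite -(size_map_poly gam) hmap neq_ltn hq1 orbT.
have [c hroot] := closed_rootP q' hs'.
have hrq : root q (gam c) by rewrite -hmap /root horner_map (eqP hroot) rmorph0.
have hdm : ('X - (gam c)%:P) %| m by apply: dvdp_trans hqm; rewrite dvdp_XsubCl.
set r := m %/ ('X - (gam c)%:P).
have hmr : r * ('X - (gam c)%:P) = m by rewrite /r divpK.
have hr0 : r != 0 by apply: contraNneq hm => h; rewrite -hmr h mul0r.
have hsr : (size r < size m)%N.
  rewrite -hmr size_mul ?polyXsubC_eq0 // size_XsubC addn2 /=; exact: ltnSn.
have [u hu] := hmin r hr0 hsr.
exists c, (Pev r u); split => //.
have : Pev ('X - (gam c)%:P) (Pev r u) = 0 by rewrite -Pev_mul mulrC hmr ham.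
by rewrite Pev_XsubC act_gam => /eqP; rewrite subr_eq0 => /eqP.
Qed.

Lemma core_eigen : (exists w : W, w != 0) -> exists c (w : W), w != 0 /\ phi w = c *: w.
Proof.
move=> hW.
have [m [hm ham hmin]] := ex_min_ann.
have [q [v0 [hmon hq1 hirr hv0 hq]]] := @ex_irr m hm ham hmin hW.
have hqm : q %| m.
  case: (hirr m) => // hc; exfalso; move/negP: hv0; apply; apply/eqP.
  exact: (@bezout_kill _ _ _ hc ham hq).
have h1 : (1 : C) != 0 by exact: oner_neq0.
case: (@chain E 1 m q v0 h1 E_semi E_phi hm ham hmon hq1 hirr hq) => [[j hj]|[t [ht hper]]];
  last exact: (@eigen_of_periodic m q hm ham hmin hqm hq1 t ht hper).
have hex : exists j, iter j E v0 == 0 by exists j; rewrite hj.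
case: (ex_minnP hex) => j0 /eqP hj0 hmin0.
case: j0 hj0 hmin0 => [|j'] hj0 hmin0; first by move: hv0; rewrite /= in hj0; rewrite hj0 eqxx.
set v := iter j' E v0.
have hv : v != 0.
  apply/negP => /eqP h; have := hmin0 j'; rewrite /v in h; rewrite h eqxx => /(_ isT).
  by rewrite ltnn.
have hEv : E v = 0 by rewrite -hj0.
set q' := map_poly (sg (1 *+ j')) q.
have hq' : Pev q' v = 0 by exact: iter_Pev.
have hirr' : Irr q' by exact: Irr_map.
have hmon' : q' \is monic by rewrite map_monic.
have hq1' : (1 < size q')%N by rewrite size_map_poly.
have hqm' : q' %| m.
  case: (hirr' m) => // hc; exfalso; move/negP: hv; apply; apply/eqP.
  exact: (@bezout_kill _ _ _ hc ham hq').
have hm1 : (-1 : C) != 0 by rewrite oppr_eq0 oner_neq0.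
case: (@chain F (-1) m q' v hm1 F_semi F_phi hm ham hmon' hq1' hirr' hq') => [[N hN]|[t [ht hper]]].
  by exfalso; move/negP: hv; apply; apply/eqP; exact: (@lemmaX v hEv N hN).
exact: (@eigen_of_periodic m q' hm ham hmin hqm' hq1' t ht hper).
Qed.

End Core.

End PDm.
Import PDm.

Import GRing.Theory.
Local Open Scope ring_scope.

Theorem proposition6p17 (R : realType) (W : lmodType R[i])
  (E F H : {linear W -> W}) (act : {fraction {poly R[i]}} -> W -> W) :
  rational_sl2 E F H act -> R_simple E F H act ->
  forall phi : {linear W -> W}, sl2_endo E F H phi ->
    exists c : R[i], forall v, phi v = c *: v.
Proof.
move=> [Hsl2 Hcz Hfd] [hW Hsimp] phi Hphi.
pose gam := ((@FracField.tofrac _) \o polyC : {rmorphism R[i] -> {fraction {poly R[i]}}}).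
pose sg := (fun s => (sig s : {rmorphism {fraction {poly R[i]}} -> {fraction {poly R[i]}}})).
have hzK : forall s, sg s ('X)%:F = ('X)%:F + gam s.
  by move=> s; rewrite /sg /gam /= sig_tofrac shpX tofracD.
have hnotc : forall c, ('X : {poly R[i]})%:F != gam c.
  move=> c; rewrite /gam /= tofrac_eq; apply/negP => /eqP h.
  by have := size_polyC c; rewrite -h size_polyX; case: (c != 0).
have hEF : forall v, E (F v) = F (E v) + act (gam (-2) * ('X)%:F) v.
  move=> v; case: Hsl2 => _ _ h.
  change (E (F v) = F (E v) + act (hK R) v).
  by rewrite (@actH _ _ _ _ Hcz) -(h v) addrC subrK.
have hper : forall t x, t != 0 -> sg t x = x -> exists c, x = gam c.
  by move=> t x ht hx; have [c ->] := @sig_periodic _ t x ht hx; exists c.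
have := @core_eigen R _ W act (@act_lin _ _ _ _ Hcz) (@actDl _ _ _ _ Hcz) (@actM _ _ _ _ Hcz) (@act1 _ _ _ _ Hcz)
  phi (@phi_act _ _ _ _ _ _ Hcz _ Hphi) Hfd sg (@sig_comp _) (@sig0 _) gam (@actC _ _ _ _ Hcz)
  ('X)%:F hzK hnotc E F (@E_semi _ _ _ _ _ _ Hsl2 Hcz) (@F_semi _ _ _ _ _ _ Hsl2 Hcz)
  (@E_phi _ _ _ _ _ _ Hphi) (@F_phi _ _ _ _ _ _ Hphi) hEF hper hW.
move=> [c [w [hw hpw]]].
exists c.
pose S := fun v => phi v = c *: v.
have hS : sl2_submodule E F H S.
  split; rewrite /S.
  - by rewrite linear0 scaler0.
  - by move=> c' v w' h1 h2; rewrite linearD linearZ /= h1 h2 scalerDr !scalerA mulrC.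
  - by case: Hphi => h _ _ v hv; rewrite h hv linearZ.
  - by case: Hphi => _ h _ v hv; rewrite h hv linearZ.
  - by case: Hphi => _ _ h v hv; rewrite h hv linearZ.
have hC : Cz_subspace act S.
  split; rewrite /S.
  - by rewrite linear0 scaler0.
  - by move=> v w' h1 h2; rewrite linearD h1 h2 scalerDr.
  - by move=> a v hv; rewrite (@phi_act _ _ _ _ _ _ Hcz _ Hphi) hv (@PCm.actZr _ _ _ _ Hcz).
case: (Hsimp S hS hC) => [h0|hall]; last exact: hall.
by exfalso; move/negP: hw; apply; apply/eqP; apply: h0.
Qed.
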